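(* Under the standing setting and assumptions (A1)–(A3) described in the context, assume $\mathcal A$ is strictly convex and $\mathcal R(X)\neq\emptyset$ for all $X\in\mathcal X$. Then $|\mathcal R(X)|=1$ for all $X\in\mathcal X$.
   Context: Let $\mathcal X$ be a Hausdorff, first countable, locally convex topological vector space over $\mathbb R$, partially ordered by a partial order $\geq$ with positive cone $\mathcal X_+=\{X\in\mathcal X: X\geq 0\}$. Let $\mathcal M\subset\mathcal X$ be a vector subspace with $1<\dim\mathcal M<\infty$, carrying the relative topology, and let $\pi:\mathcal M\to\mathbb R$ be linear. Standing assumptions: (A1) there is $U\in\mathcal M\cap\mathcal X_+$ with $\pi(U)=1$; (A2) $\mathcal A\subsetneq\mathcal X$ is closed, contains $0$, and satisfies $\mathcal A+\mathcal X_+\subset\mathcal A$; (A3) the map $\rho(X)=\inf\{\pi(Z): Z\in\mathcal M,\ X+Z\in\mathcal A\}$ is finitely valued and continuous on $\mathcal X$. The optimal payoff map is $\mathcal R(X)=\{Z\in\mathcal M: X+Z\in\mathcal A,\ \pi(Z)=\rho(X)\}$; $|\cdot|$ is cardinality. $\mathcal A$ is strictly convex if $\lambda X+(1-\lambda)Y\in\mathrm{int}\,\mathcal A$ for all $\lambda\in(0,1)$ and all distinct $X,Y\in\mathcal A$. *)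

(* Defs.v *)
From HB Require Import structures.
From mathcomp Require Import all_boot all_order all_algebra.
From mathcomp Require Import all_classical all_reals all_analysis.
Set Implicit Arguments. Unset Strict Implicit. Unset Printing Implicit Defensive.
Import Order.TTheory GRing.Theory Num.Theory.
Local Open Scope classical_set_scope.
Local Open Scope ring_scope.

Section defs.
Context {R : realType} {X : tvsType R}.

Definition first_countable : Prop :=
  forall x : X, exists B : nat -> set X,
    (forall n, nbhs x (B n)) /\ (forall U, nbhs x U -> exists n, B n `<=` U).

Definition is_partial_order (ge : X -> X -> Prop) : Prop :=
  (forall x, ge x x) /\ (forall x y, ge x y -> ge y x -> x = y) /\
  (forall x y z, ge x y -> ge y z -> ge x z).

Definition pos_cone (ge : X -> X -> Prop) : set X := [set x | ge x 0].

Definition is_subspace (M : set X) : Prop :=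
  M 0 /\ (forall (a : R) x y, M x -> M y -> M (a *: x + y)).

Definition has_dim (M : set X) (n : nat) : Prop :=
  exists b : 'I_n -> X,
    (forall i, M (b i)) /\
    (forall c : 'I_n -> R, \sum_(i < n) c i *: b i = 0 -> forall i, c i = 0) /\
    (forall x, M x -> exists c : 'I_n -> R, x = \sum_(i < n) c i *: b i).

(* pi is linear on M (only its values on M matter) *)
Definition linear_on (M : set X) (pi : X -> R) : Prop :=
  forall (a : R) x y, M x -> M y -> pi (a *: x + y) = a * pi x + pi y.

Definition rho_set (M A : set X) (pi : X -> R) (x : X) : set (\bar R) :=
  [set (pi z)%:E | z in [set z | M z /\ A (x + z)]].

Definition rho_ext (M A : set X) (pi : X -> R) (x : X) : \bar R :=
  ereal_inf (rho_set M A pi x).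

(* real-valued rho (meaningful when rho_ext is finite, as assumed in (A3)) *)
Definition rho (M A : set X) (pi : X -> R) (x : X) : R :=
  fine (rho_ext M A pi x).

Definition optimal_payoff (M A : set X) (pi : X -> R) (x : X) : set X :=
  [set z | M z /\ A (x + z) /\ pi z = rho M A pi x].

Definition strictly_convex (A : set X) : Prop :=
  forall (l : R) x y, 0 < l < 1 -> A x -> A y -> x <> y ->
    interior A (l *: x + (1 - l) *: y).

End defs.

(* Main.v *)
Require Import Defs.
From HB Require Import structures.
From mathcomp Require Import all_boot all_order all_algebra.
From mathcomp Require Import all_classical all_reals all_analysis.
Import Order.TTheory GRing.Theory Num.Theory numFieldTopology.Exports numFieldNormedType.Exports.
Local Open Scope classical_set_scope.
Local Open Scope ring_scope.
From mathcomp Require Import lra.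
Lemma near_line_tvs (R: realType) (X: tvsType R) (A: set X) (p u : X) :
  nbhs p A -> exists e : R, 0 < e /\ A (p - e *: u).
Proof.
move=> pA.
have h3 : (fun t : R^o => t *: u) @ nbhs (0:R^o) --> 0 *: u.
  apply: (@continuous_comp R^o (R^o * X)%type X (fun t => (t, u))
    (fun x => x.1 *: x.2)); last exact: scale_continuous.
  by apply: (@cvg_pair _ _ _ _ (nbhs (0 : R^o))); [exact: cvg_id|exact: cvg_cst].
have hc : (fun t : R^o => p + t *: u) @ nbhs (0:R^o) --> p + 0 *: u.
  apply: (@continuous_comp R^o (X * X)%type X (fun t => (p, t *: u))
    (fun x => x.1 + x.2)); last exact: add_continuous.
  by apply: (@cvg_pair _ _ _ _ (nbhs p)); [exact: cvg_cst|exact: h3].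
rewrite /= scale0r addr0 in hc.
have /nbhs_ballP[e /= e0 he] := hc _ pA.
exists (e / 2); split; first by rewrite divr_gt0.
have := he (- (e / 2)).
rewrite /= scaleNr; apply.
rewrite -ball_normE /= sub0r normrN normrN ger0_norm ?divr_ge0 ?ltW //.
by rewrite ltr_pdivrMr // ltr_pMr // ltr1n.
Qed.
Theorem mainTheorem14 (R : realType) (X : tvsType R)
  (ge : X -> X -> Prop) (M : set X) (n : nat) (pi : X -> R) (A : set X) :
  hausdorff_space X ->
  first_countable (X := X) ->
  is_partial_order ge ->
  is_subspace M -> (1 < n)%N -> has_dim M n ->
  linear_on M pi ->
  (* (A1) *)
  (exists U, M U /\ pos_cone ge U /\ pi U = 1) ->
  (* (A2) *)
  closed A -> A 0 -> A != [set: X] ->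
  (forall a p, A a -> pos_cone ge p -> A (a + p)) ->
  (* (A3) *)
  (forall x, rho_ext M A pi x \is a fin_num) ->
  continuous (rho M A pi) ->
  (* theorem hypotheses *)
  strictly_convex A ->
  (forall x, optimal_payoff M A pi x !=set0) ->
  forall x, exists Z, optimal_payoff M A pi x = [set Z].
Proof.
move=> _ _ _ [M0 Mlin] _ _ pil [U [MU [_ piU]]] _ _ _ _ fin _ sc ne x.
have [Z [MZ [AZ piZ]]] := ne x.
exists Z; apply/seteqP; split => z; last by move=> ->.
move=> [Mz [Az piz]].
case: (pselect (z = Z)) => // hne; exfalso.
have pi0 : pi 0 = 0.
  have := pil 1 0 0 M0 M0; rewrite scale1r addr0 mul1r => h.
  lra.
have MS a y : M y -> M (a *: y).
  by move=> My; have := Mlin a y 0 My M0; rewrite addr0.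
have piS a y : M y -> pi (a *: y) = a * pi y.
  by move=> My; have := pil a y 0 My M0; rewrite addr0 pi0 addr0.
set w := 2^-1 *: z + 2^-1 *: Z.
have Mw : M w by apply: Mlin => //; exact: MS.
have piw : pi w = rho M A pi x.
  have h1 := pil (2^-1) z (2^-1 *: Z) Mz (MS _ _ MZ).
  rewrite /w h1 (piS _ _ MZ) piz piZ; lra.
have h2 : (1 - 2^-1 : R) = 2^-1 by lra.
have hint := sc (2^-1) (x + z) (x + Z).
have := hint ltac:(apply/andP; split; lra) Az AZ ltac:(by move/addrI).
have -> : 2^-1 *: (x + z) + (1 - 2^-1) *: (x + Z) = x + w.
  rewrite h2 /w !scalerDr addrACA -scalerDl.
  have -> : (2^-1 + 2^-1 : R) = 1 by lra.
  by rewrite scale1r.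
move=> /(@near_line_tvs _ _ _ _ U) [e [e0 Ae]].
have Mz' : M (w - e *: U).
  by have := Mlin (- e) U w MU Mw; rewrite addrC scaleNr.
have piz' : pi (w - e *: U) = - e + rho M A pi x.
  by have := pil (- e) U w MU Mw; rewrite addrC scaleNr piU mulr1 piw.
have hr : rho_ext M A pi x = (rho M A pi x)%:E by rewrite /rho fineK.
have : (rho_ext M A pi x <= (pi (w - e *: U))%:E)%E.
  apply: ereal_inf_lbound; exists (w - e *: U); last by [].
  by split; [exact: Mz' | rewrite addrA].
rewrite hr piz' lee_fin => h.
lra.
Qed.
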